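(* With $\theta$ and $\Theta=\theta\vee\widetilde\theta$ as in the context, $c(\Theta)=c(\theta)$.
   Context: $\theta:\mathbb{A}\to\mathbb{A}^\lambda$ is a primitive substitution of constant length $\lambda\ge2$ (some iterate $\theta^k(a)$ contains all letters for each $a$) with $\theta(a_0)_0=a_0$ for some $a_0$, injective on letters, with infinite subshift. Column number of a substitution $\zeta$ over $\mathbb{B}$: $c(\zeta)=\min_{k\ge1,0\le j<\lambda^k}|\{\zeta^k(b)_j:b\in\mathbb{B}\}|$. $\mathcal{X}$ is the set of $M\subset\mathbb{A}$ with $|M|=c(\theta)$ and $M=\{\theta^k(a)_j:a\in\mathbb{A}\}$ for some $k\ge1$, $0\le j<\lambda^k$; $\widetilde\theta(M)_j=\{\theta(a)_j:a\in M\}$. $\overline{\mathcal{X}}=\{(a,M):M\in\mathcal{X},a\in M\}$ and $\Theta:\overline{\mathcal{X}}\to\overline{\mathcal{X}}^\lambda$, $\Theta(a,M)_j=(\theta(a)_j,\widetilde\theta(M)_j)$. *)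

(* Defs.v *)
From HB Require Import structures.
From Stdlib Require Import ZArith ClassicalEpsilon ClassicalDescription.
From mathcomp Require Import all_boot.
Set Implicit Arguments. Unset Strict Implicit. Unset Printing Implicit Defensive.

Definition pbool (P : Prop) : bool :=
  if excluded_middle_informative P then true else false.

Section Subst.
Variable B : finType.

(* A substitution zeta : B -> B^lambda is represented as zeta : B -> seq B. *)
Definition iter_word (zeta : B -> seq B) (k : nat) (b : B) : seq B :=
  iter k (fun w => flatten (map zeta w)) [:: b].

Definition letter_at (zeta : B -> seq B) (k j : nat) (b : B) : B :=
  nth b (iter_word zeta k b) j.

Definition column (zeta : B -> seq B) (S : {set B}) (k j : nat) : {set B} :=
  [set letter_at zeta k j b | b in S].

Definition is_column_number (zeta : B -> seq B) (lam : nat) (S : {set B}) (n : nat) : Prop :=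
  (exists k j, 1 <= k /\ j < lam ^ k /\ #|column zeta S k j| = n) /\
  (forall k j, 1 <= k -> j < lam ^ k -> n <= #|column zeta S k j|).

(* column number of zeta over the alphabet S (the minimum always exists) *)
Definition column_number (zeta : B -> seq B) (lam : nat) (S : {set B}) : nat :=
  epsilon (inhabits 0%N) (is_column_number zeta lam S).

Definition subshift (zeta : B -> seq B) (x : Z -> B) : Prop :=
  forall (i : Z) (n : nat), exists k b,
    infix [seq x (i + Z.of_nat m)%Z | m <- iota 0 n] (iter_word zeta k b).

Definition infinite_subshift (zeta : B -> seq B) : Prop :=
  ~ exists (n : nat) (f : 'I_n -> (Z -> B)),
      forall x, subshift zeta x -> exists i, f i = x.

Definition primitive (zeta : B -> seq B) : Prop :=
  forall a, exists k, 1 <= k /\ forall b, b \in iter_word zeta k a.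

End Subst.

Section Theta.
Variable A : finType.
Variables (theta : A -> seq A) (lam : nat).

Definition cTheta : nat := column_number theta lam setT.

Definition calX : {set {set A}} :=
  [set M : {set A} | (#|M| == cTheta) &&
     pbool (exists k j, 1 <= k /\ j < lam ^ k /\ M = column theta setT k j)].

Definition calXbar : {set (A * {set A})} :=
  [set p | (p.2 \in calX) && (p.1 \in p.2)].

Definition theta_tilde_at (M : {set A}) (j : nat) : {set A} :=
  [set nth a (theta a) j | a in M].

Definition Theta (p : A * {set A}) : seq (A * {set A}) :=
  [seq (nth p.1 (theta p.1) j, theta_tilde_at p.2 j) | j <- iota 0 lam].

End Theta.

(* Main.v *)
Require Import Defs.
From mathcomp Require Import all_boot.
From Stdlib Require Import ClassicalEpsilon ClassicalDescription.
Set Implicit Arguments. Unset Strict Implicit. Unset Printing Implicit Defensive.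

Lemma pboolP (P : Prop) : reflect P (pbool P).
Proof. rewrite /pbool; case: excluded_middle_informative => h; by constructor. Qed.

Lemma nth_flatten_unif (B C : Type) (g : B -> seq C) (n : nat) (x0 : C) (y0 : B)
  (s : seq B) (j j' : nat) :
  (forall x, size (g x) = n) -> j < size s -> j' < n ->
  nth x0 (flatten (map g s)) (j * n + j') = nth x0 (g (nth y0 s j)) j'.
Proof.
move=> hg; elim: s j => [|x s IH] [|j] //= hj hj'.
  by rewrite mul0n add0n nth_cat hg hj'.
rewrite nth_cat hg mulSn -addnA ltnNge leq_addr /= addKn IH //.
Qed.

Section Comp.
Variable B : finType.
Variables (zeta : B -> seq B) (lam : nat).
Hypothesis hsize : forall b, size (zeta b) = lam.

Lemma size_iter k b : size (iter_word zeta k b) = lam ^ k.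
Proof.
rewrite /iter_word; elim: k => [|k IH] //=.
rewrite size_flatten /shape -map_comp.
have -> : [seq (size \o zeta) i | i <- iter k (fun w => flatten [seq zeta i | i <- w]) [:: b]]
   = nseq (size (iter k (fun w => flatten [seq zeta i | i <- w]) [:: b])) lam.
  elim: (iter _ _ _) => [|x s IHs] //=; by rewrite hsize IHs.
rewrite IH expnS sumn_nseq mulnC //.
Qed.

Lemma flatten_map_F (s : seq B) (g : B -> seq B) :
  flatten (map zeta (flatten (map g s))) = flatten (map (fun x => flatten (map zeta (g x))) s).
Proof. elim: s => [|x s IH] //=; by rewrite map_cat flatten_cat IH. Qed.

Lemma iter_add k k' b :
  iter_word zeta (k' + k) b = flatten (map (iter_word zeta k') (iter_word zeta k b)).
Proof.
rewrite /iter_word iterD.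
elim: k' => [|k' IH] /=.
  by elim: (iter _ _ _) => [|x s IHs] //=; rewrite -IHs.
by rewrite IH flatten_map_F.
Qed.

Lemma letter_comp k k' j j' b : j < lam ^ k -> j' < lam ^ k' ->
  letter_at zeta (k' + k) (j * lam ^ k' + j') b =
  letter_at zeta k' j' (letter_at zeta k j b).
Proof.
move=> hj hj'; rewrite /letter_at iter_add.
rewrite (nth_flatten_unif b b (n := lam ^ k')) ?size_iter //.
apply: set_nth_default; rewrite size_iter.
exact: hj'. move=> x; exact: size_iter.
Qed.

Lemma letter1 j b : letter_at zeta 1 j b = nth b (zeta b) j.
Proof. by rewrite /letter_at /iter_word /= cats0. Qed.

Lemma column_uniq S n n' : is_column_number zeta lam S n ->
  is_column_number zeta lam S n' -> n = n'.
Proof.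
move=> [[k [j [h1 [h2 h3]]]] h4] [[k' [j' [h1' [h2' h3']]]] h4'].
apply/eqP; rewrite eqn_leq; apply/andP; split.
  by rewrite -h3'; apply: h4.
by rewrite -h3; apply: h4'.
Qed.

Lemma column_exists S : 0 < lam -> exists n, is_column_number zeta lam S n.
Proof.
move=> hl.
pose P := fun n => pbool (exists k j, 1 <= k /\ j < lam ^ k /\ #|column zeta S k j| = n).
have ex : exists n, P n.
  exists #|column zeta S 1 0|; apply/pboolP; exists 1, 0; split => //; split => //.
case: (ex_minnP ex) => n /pboolP hn hmin.
exists n; split => // k j hk hj; apply: hmin; apply/pboolP; by exists k, j.
Qed.

Lemma column_number_spec S : 0 < lam ->
  is_column_number zeta lam S (column_number zeta lam S).
Proof. move=> hl; rewrite /column_number; apply: epsilon_spec; exact: column_exists. Qed.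

End Comp.


Section Main.
Variable A : finType.
Variables (theta : A -> seq A) (lam : nat).
Hypothesis hsize : forall a, size (theta a) = lam.
Hypothesis hlam : 0 < lam.

Lemma size_Theta p : size (Theta theta lam p) = lam.
Proof. by rewrite /Theta size_map size_iota. Qed.

Lemma letter_Theta k j p : j < lam ^ k ->
  letter_at (Theta theta lam) k j p = (letter_at theta k j p.1, column theta p.2 k j).
Proof.
elim: k j p => [|k IH] j p.
  rewrite expn0 ltnS leqn0 => /eqP ->; case: p => a M.
  rewrite /letter_at /column /= /letter_at /=; congr (_, _).
  by apply/setP => x; rewrite imset_id.
move=> hj.
have hq : j %/ lam < lam ^ k by rewrite ltn_divLR // -expnSr.
have hr : j %% lam < lam ^ 1 by rewrite expn1 ltn_mod.
rewrite (divn_eq j lam) -{1 4}(expn1 lam) -addn1 addnC.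
rewrite (letter_comp (size_Theta) _ hq hr) IH // letter1 /Theta.
rewrite (nth_map 0) ?size_iota -?expn1 // nth_iota -?expn1 //= add0n.
rewrite (letter_comp hsize _ hq hr) letter1; congr (_, _).
rewrite /theta_tilde_at /column -imset_comp; apply: eq_imset => b /=.
by rewrite (letter_comp hsize _ hq hr) letter1.
Qed.

End Main.

Theorem mainTheorem14 (A : finType) (lam : nat) (theta : A -> seq A)
  (hlam : 2 <= lam)
  (hsize : forall a, size (theta a) = lam)
  (hprim : primitive theta)
  (ha0 : exists a0, nth a0 (theta a0) 0 = a0)
  (hinj : injective theta)
  (hinf : infinite_subshift theta) :
  column_number (Theta theta lam) lam (calXbar theta lam) = cTheta theta lam.
Proof.
have hl : 0 < lam by apply: leq_trans hlam.
have hc := column_number_spec theta setT hl.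
rewrite -/(cTheta theta lam) in hc.
set c := cTheta theta lam in hc *.
case: hc => [[k0 [j0 [hk0 [hj0 hN]]]] hlow].
set N := column theta setT k0 j0 in hN.
have L : forall M, M \in calX theta lam -> forall k j, 1 <= k -> j < lam ^ k ->
    c <= #|column theta M k j|.
  move=> M; rewrite inE => /andP [_ /pboolP [k1 [j1 [hk1 [hj1 ->]]]]] k j hk hj.
  have -> : column theta (column theta setT k1 j1) k j =
            column theta setT (k + k1) (j1 * lam ^ k + j).
    rewrite /column -imset_comp; apply: eq_imset => b /=.
    by rewrite (letter_comp hsize).
  apply: hlow; first by rewrite (leq_trans hk1) // leq_addl.
  apply: (@leq_trans ((j1.+1) * lam ^ k)); first by rewrite mulSn addnC ltn_add2r.
  by rewrite expnD mulnC leq_mul2l hj1 orbT.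
have NX : N \in calX theta lam.
  rewrite inE hN eqxx /=; apply/pboolP; by exists k0, j0.
have key : is_column_number (Theta theta lam) lam (calXbar theta lam) c.
  split.
    exists k0, j0; split => //; split => //.
    apply/eqP; rewrite eqn_leq; apply/andP; split.
      rewrite -hN; apply: (@leq_trans #|[set (b, N) | b in N]|); last exact: leq_imset_card.
      apply: subset_leq_card; apply/subsetP => q /imsetP [p hp ->].
      rewrite (letter_Theta hsize hl p hj0).
      move: hp; rewrite inE => /andP [hp2 hp1].
      have eqN : column theta p.2 k0 j0 = N.
        apply/eqP; rewrite eqEcard; apply/andP; split.
          by apply: imsetS; apply/subsetP => x.
        by rewrite hN; apply: L.
      rewrite eqN; apply/imsetP; exists (letter_at theta k0 j0 p.1) => //.
      by rewrite -eqN; apply: imset_f.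
    apply: (@leq_trans #|[set q.1 | q in column (Theta theta lam) (calXbar theta lam) k0 j0]|); last exact: leq_imset_card.
    apply: (@leq_trans #|column theta N k0 j0|); first by apply: L.
    apply: subset_leq_card; apply/subsetP => x /imsetP [a ha ->].
    apply/imsetP; exists (letter_at (Theta theta lam) k0 j0 (a, N)).
      by apply: imset_f; rewrite inE NX ha.
    by rewrite (letter_Theta hsize hl (a, N) hj0).
  move=> k j hk hj.
  apply: (@leq_trans #|[set q.1 | q in column (Theta theta lam) (calXbar theta lam) k j]|); last exact: leq_imset_card.
  apply: (@leq_trans #|column theta N k j|); first by apply: L.
  apply: subset_leq_card; apply/subsetP => x /imsetP [a ha ->].
  apply/imsetP; exists (letter_at (Theta theta lam) k j (a, N)).
    by apply: imset_f; rewrite inE NX ha.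
  by rewrite (letter_Theta hsize hl (a, N) hj).
apply: column_uniq key; exact: column_number_spec.
Qed.
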